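(* For every $a\in\{1,\dots,n\}$, the following identities hold in $\mathrm{Cl}_q(n,k)$: \[ \psi_a \omega_a^{2k} = q^{-2k}\psi_a,\qquad \psi_a^*\omega_a^{2k}=\psi_a^*,\qquad \omega_a^{-k} = (q^{2k}+1)\omega_a^k - q^{2k}\omega_a^{3k}. \]
   Context: Let $\mathbb{k}$ be a field of characteristic different from $2$, let $q\in\mathbb{k}^\times$, and let $n,k$ be positive integers. The quantum Clifford algebra $\mathrm{Cl}_q(n,k)$ is the unital associative $\mathbb{k}$-algebra generated by $\psi_a,\psi_a^*,\omega_a,\omega_a^{-1}$ for $a\in\{1,\dots,n\}$, subject to the relations (for all $a,b\in\{1,\dots,n\}$): $\omega_a\omega_b=\omega_b\omega_a$; $\omega_a\omega_a^{-1}=1$; $\omega_a\psi_b=q^{\delta_{ab}}\psi_b\omega_a$; $\omega_a\psi_b^*=q^{-\delta_{ab}}\psi_b^*\omega_a$; $\psi_a\psi_b+\psi_b\psi_a=0$; $\psi_a^*\psi_b^*+\psi_b^*\psi_a^*=0$; $\psi_a\psi_a^*+q^k\psi_a^*\psi_a=\omega_a^{-k}$; $\psi_a\psi_a^*+q^{-k}\psi_a^*\psi_a=\omega_a^{k}$; and $\psi_a\psi_b^*+\psi_b^*\psi_a=0$ if $a\neq b$. *)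

(* Defs.v *)
From HB Require Import structures.
From mathcomp Require Import all_boot all_order all_algebra.
Set Implicit Arguments. Unset Strict Implicit. Unset Printing Implicit Defensive.
Import GRing.Theory.
Local Open Scope ring_scope.

(* An identity holds in
   the presented algebra Cl_q(n,k) iff it holds for every such family in every
   F-algebra (universal property of the presentation). *)
Definition Clq_relations (F : fieldType) (A : algType F) (n k : nat) (q : F)
    (psi psis om omi : 'I_n -> A) : Prop :=
  (forall a b, om a * om b = om b * om a) /\
      (forall a, om a * omi a = 1) /\
      (forall a b, om a * psi b = (if a == b then q else 1) *: (psi b * om a)) /\
      (forall a b, om a * psis b = (if a == b then q^-1 else 1) *: (psis b * om a)) /\
      (forall a b, psi a * psi b + psi b * psi a = 0) /\
      (forall a b, psis a * psis b + psis b * psis a = 0) /\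
      (forall a, psi a * psis a + q ^+ k *: (psis a * psi a) = omi a ^+ k) /\
      (forall a, psi a * psis a + q ^- k *: (psis a * psi a) = om a ^+ k) /\
      (forall a b, a != b -> psi a * psis b + psis b * psi a = 0).

(* Main.v *)
Require Import Defs.
From HB Require Import structures.
From mathcomp Require Import all_boot all_order all_algebra.
From mathcomp Require Import ring.
Import GRing.Theory.
Local Open Scope ring_scope.

Lemma pow_inv_one (R : pzRingType) (x y : R) m : x * y = 1 -> x ^+ m * y ^+ m = 1.
Proof.
move=> h; elim: m => [|m IH]; first by rewrite !expr0 mulr1.
by rewrite exprS exprSr mulrA -(mulrA x) IH mulr1.
Qed.

Lemma sq0 (F : fieldType) (A : algType F) (x : A) :
  (2%:R : F) != 0 -> x * x + x * x = 0 -> x * x = 0.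
Proof.
move=> h2 h; have : (2%:R : F) *: (x * x) = 0 by rewrite scaler_nat mulr2n.
by move/eqP; rewrite scaler_eq0 (negbTE h2) /= => /eqP.
Qed.

Lemma comb (F : fieldType) (A : algType F) (X Y : A) a b d e :
  a *: (X + b *: Y) - d *: (X + e *: Y) = (a - d) *: X + (a * b - d * e) *: Y.
Proof.
rewrite !scalerDr !scalerA scalerBl scalerBl opprD !addrA; congr (_ + _).
by rewrite -!addrA; congr (_ + _); rewrite addrC.
Qed.

Theorem lemma3p2 (F : fieldType) (A : algType F) (n k : nat) (q : F)
    (psi psis om omi : 'I_n -> A) :
  (2%:R : F) != 0 -> q != 0 -> (0 < n)%N -> (0 < k)%N ->
  @Clq_relations F A n k q psi psis om omi ->
  forall a : 'I_n,
    [/\ psi a * om a ^+ (2 * k) = q ^- (2 * k) *: psi a,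
        psis a * om a ^+ (2 * k) = psis a &
        omi a ^+ k = (q ^+ (2 * k) + 1) *: om a ^+ k - q ^+ (2 * k) *: om a ^+ (3 * k)].
Proof.
move=> h2 hq _ _ [_ [hinv [_ [_ [hpp [hss [R1 [R2 _]]]]]]]] a.
move: (hpp a a) (hss a a) (R1 a) (R2 a) (@pow_inv_one _ _ _ k (hinv a)).
set p := psi a; set s := psis a; set w := om a; set w' := omi a => pp ss r1 r2 ww.
have {}pp := @sq0 _ _ _ h2 pp; have {}ss := @sq0 _ _ _ h2 ss.
set c := q ^+ k.
have c0 : c != 0 by rewrite expf_neq0.
have e2 : q ^+ (2 * k) = c * c by rewrite mul2n -addnn exprD.
rewrite -/c in r1 r2.
have pw : p * w ^+ k = c^-1 *: (p * s * p).
  by rewrite -r2 mulrDr mulrA pp mul0r add0r -scalerAr mulrA.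
have pw' : p * w' ^+ k = c *: (p * s * p).
  by rewrite -r1 mulrDr mulrA pp mul0r add0r -scalerAr mulrA.
have sw : s * w ^+ k = s * p * s.
  by rewrite -r2 mulrDr -scalerAr !mulrA ss mul0r scaler0 addr0.
have sw' : s * w' ^+ k = s * p * s.
  by rewrite -r1 mulrDr -scalerAr !mulrA ss mul0r scaler0 addr0.
have pid : p * s * p * s * p = p.
  transitivity (p * w ^+ k * w' ^+ k); last by rewrite -mulrA ww mulr1.
  rewrite pw -scalerAl -!mulrA pw' !scalerAr scalerA mulVf // scale1r.
  by rewrite !mulrA.
have sid : s * p * s * p * s = s.
  transitivity (s * w ^+ k * w' ^+ k); last by rewrite -mulrA ww mulr1.
  by rewrite sw -!mulrA sw' !mulrA.
have w2 : w ^+ (2 * k) = w ^+ k * w ^+ k by rewrite mul2n -addnn exprD.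
have A1 : p * w ^+ (2 * k) = q ^- (2 * k) *: p.
  rewrite w2 mulrA pw -scalerAl -!mulrA pw -!scalerAr scalerA !mulrA pid.
  by rewrite e2 invfM.
have A2 : s * w ^+ (2 * k) = s.
  by rewrite w2 mulrA sw -!mulrA sw !mulrA sid.
split=> //.
have w3 : w ^+ (3 * k) = w ^+ k * w ^+ (2 * k).
  by rewrite -exprD; congr (_ ^+ _); rewrite mulSn.
rewrite w3 -{2}r2 mulrDl -mulrA A2 -scalerAl -mulrA A1 -scalerAr scalerA.
rewrite -r1 -r2 comb e2 -{1}[p * s]scale1r; congr (_ *: _ + _ *: _).
  by ring.
by field.
Qed.
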